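(* Let $k\in\mathbb N^+$, $n\ge 2$, $\mathbf C=(c_0,\dots,c_k)\in\{0,1\}^{k+1}$ with $\mathbf C\neq(0,\dots,0)$. Define the polynomials $$x_{\mathbf C}^{n\uparrow}=x\prod_{j=2}^{n}\big((j-1)^kF_j(\mathbf C)x+(j-1)^kF_j(\mathbf C')\big),\qquad x_{\mathbf C}^{n\downarrow}=x\prod_{j=2}^{n}\big((j-1)^kF_j(\mathbf C)x-(j-1)^kF_j(\mathbf C')\big),$$ and $O^u_{\mathbf C}(n,m)=O_{\mathbf C}(n,m+c_k-1)$, $O^s_{\mathbf C}(n,m)=(-1)^{n+m}O_{\mathbf C}(n,m+c_k-1)$. Then $$x_{\mathbf C}^{n\uparrow}=\sum_{m=0}^nO^u_{\mathbf C}(n,m)x^m,\qquad x_{\mathbf C}^{n\downarrow}=\sum_{m=0}^nO^s_{\mathbf C}(n,m)x^m;$$ the zeros of $x_{\mathbf C}^{n\uparrow}$ are $x=0$ and $x=-F_j(\mathbf C')/F_j(\mathbf C)$ for $j=2,\dots,n$, and the zeros of $x_{\mathbf C}^{n\downarrow}$ are $x=0$ and $x=F_j(\mathbf C')/F_j(\mathbf C)$ for $j=2,\dots,n$.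
   Context: Put $\mathbf C'=(1,\dots,1)-\mathbf C$. Consider $k$-tuples $(\pi_1,\dots,\pi_k)$ of permutations of $\{1,\dots,n\}$. A position $\alpha$ is a record of a permutation $\pi$ if $\pi(\alpha)<\pi(\alpha')$ for every $\alpha'<\alpha$ (position $1$ is always a record). For a tuple, let $l_\alpha$ be the number of $\beta\in\{1,\dots,k\}$ for which $\alpha$ is a record of $\pi_\beta$. The $\mathbf C$ sequential optimization set is $S=\{\alpha:c_{l_\alpha}=1\}$, with weight $|S|$; for an integer $m$, $O_{\mathbf C}(n,m)$ is the number of $k$-tuples whose weight equals $m$. For $j\ge2$ and $X=(x_0,\dots,x_k)\in\mathbb R^{k+1}$, $F_j(X)=\sum_{\beta=0}^k\binom{k}{\beta}\frac{x_\beta}{(j-1)^\beta}$. *)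

(* Defs.v *)
From HB Require Import structures.
From mathcomp Require Import all_boot all_order all_algebra all_fingroup.
Set Implicit Arguments. Unset Strict Implicit. Unset Printing Implicit Defensive.
Import Order.TTheory GRing.Theory Num.Theory.

(* Positions 1..n are encoded as 'I_n (0-based); values likewise. *)

Definition is_record (n : nat) (p : 'S_n) (a : 'I_n) : bool :=
  [forall a' : 'I_n, (a' < a)%N ==> (p a < p a')%N].

Definition lcount (n k : nat) (t : {ffun 'I_k -> 'S_n}) (a : 'I_n) : nat :=
  #|[set b : 'I_k | is_record (t b) a]|.

(* C = (c_0,...,c_k) as a function 'I_(k+1) -> bool; c_l = C (inord l). *)
Definition optset (n k : nat) (C : {ffun 'I_k.+1 -> bool})
    (t : {ffun 'I_k -> 'S_n}) : {set 'I_n} :=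
  [set a : 'I_n | C (inord (lcount t a))].

Definition weight (n k : nat) (C : {ffun 'I_k.+1 -> bool})
    (t : {ffun 'I_k -> 'S_n}) : nat := #|optset C t|.

Definition Ocount (n k : nat) (C : {ffun 'I_k.+1 -> bool}) (m : int) : nat :=
  #|[set t : {ffun 'I_k -> 'S_n} | Posz (weight C t) == m]|.

Local Open Scope ring_scope.

Definition Fj (R : fieldType) (k j : nat) (X : 'I_k.+1 -> R) : R :=
  \sum_(b < k.+1) 'C(k, b)%:R * X b / (j.-1)%:R ^+ b.
Arguments Fj {R} k j X.

Definition Cvec (R : fieldType) (k : nat) (C : {ffun 'I_k.+1 -> bool})
  : 'I_k.+1 -> R := fun b => (C b)%:R.
Definition Cvec' (R : fieldType) (k : nat) (C : {ffun 'I_k.+1 -> bool})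
  : 'I_k.+1 -> R := fun b => 1 - (C b)%:R.

Definition c_k (k : nat) (C : {ffun 'I_k.+1 -> bool}) : bool := C ord_max.

Definition xup (R : fieldType) (n k : nat) (C : {ffun 'I_k.+1 -> bool}) : {poly R} :=
  'X * \prod_(2 <= j < n.+1)
        (((j.-1)%:R ^+ k * Fj k j (Cvec R C)) *: 'X
         + ((j.-1)%:R ^+ k * Fj k j (Cvec' R C))%:P).

Definition xdown (R : fieldType) (n k : nat) (C : {ffun 'I_k.+1 -> bool}) : {poly R} :=
  'X * \prod_(2 <= j < n.+1)
        (((j.-1)%:R ^+ k * Fj k j (Cvec R C)) *: 'X
         - ((j.-1)%:R ^+ k * Fj k j (Cvec' R C))%:P).

Definition Ou (n k : nat) (C : {ffun 'I_k.+1 -> bool}) (m : nat) : nat :=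
  Ocount n C (Posz m + Posz (c_k C) - 1).

Definition Os (n k : nat) (C : {ffun 'I_k.+1 -> bool}) (m : nat) : int :=
  (-1) ^+ (n + m) * Posz (Ocount n C (Posz m + Posz (c_k C) - 1)).

(* Main.v *)
Require Import Defs.
From HB Require Import structures.
From mathcomp Require Import all_boot all_order all_algebra all_fingroup.
From mathcomp Require Import ring zify.
Import Order.TTheory GRing.Theory Num.Theory.
Local Open Scope ring_scope.

Lemma ltn_lift n (h : 'I_n.+1) (x y : 'I_n) : (lift h x < lift h y)%N = (x < y)%N.
Proof. by rewrite /= !ltnNge leq_bump2. Qed.

Lemma rec_lift n (j : 'I_n.+1) (s : 'S_n) (a : 'I_n) :
  is_record (lift_perm ord_max j s) (lift ord_max a) = is_record s a.
Proof.
rewrite /is_record; apply/forallP/forallP => H a'.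
  apply/implyP => lt; have := H (lift ord_max a').
  by rewrite !lift_max lt /= !lift_perm_lift ltn_lift.
apply/implyP; case: (unliftP ord_max a') => [a1|] -> lt.
  move: lt; rewrite !lift_max => lt.
  by have := H a1; rewrite lt /= !lift_perm_lift ltn_lift.
by move: lt; rewrite lift_max /= ltnNge ltnW.
Qed.

Lemma rec_max n (j : 'I_n.+1) (s : 'S_n) :
  is_record (lift_perm ord_max j s) ord_max = (j == ord0).
Proof.
rewrite /is_record lift_perm_id; apply/forallP/eqP => [H | ->] .
  apply/val_inj => /=; apply/eqP; rewrite -leqn0 leqNgt; apply/negP => j0.
  have n0 : (0 < n)%N by move: (ltn_ord j); rewrite ltnS; apply: leq_trans.
  have := H (lift ord_max ((s^-1)%g (Ordinal n0))).
  move: j0; rewrite lift_max ltn_ord lift_perm_lift permKV /= /bump; by case: j H => [[|j1] ?]...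
move=> a'; apply/implyP => lt; case: (unliftP ord_max a') lt => [a1|] -> lt.
  by rewrite lift_perm_lift.
by rewrite ltnn in lt.
Qed.

Lemma sum_lift_perm (R : comNzRingType) n (j : 'I_n.+1) (F : 'S_n.+1 -> R) :
  \sum_(p : 'S_n.+1 | p ord_max == j) F p = \sum_(s : 'S_n) F (lift_perm ord_max j s).
Proof.
rewrite (reindex (lift_perm ord_max j)); last first.
  pose ulsf i (s : 'S_n.+1) k := odflt k (unlift (s i) (s (lift i k))).
  have ulsfK i (s : 'S_n.+1) k: lift (s i) (ulsf i s k) = s (lift i k).
    rewrite /ulsf; have:= neq_lift i k.
    by rewrite -(can_eq (permK s)) => /unlift_some[] ? ? ->.
  have inj_ulsf: injective (ulsf ord_max _).
    move=> s; apply: can_inj (ulsf (s ord_max) s^-1%g) _ => k'.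
    by rewrite {1}/ulsf ulsfK !permK liftK.
  exists (fun s => perm (inj_ulsf s)) => [s _ | s].
    by apply/permP=> k'; rewrite permE /ulsf lift_perm_lift lift_perm_id liftK.
  move/(s _ =P _) => si0; apply/permP=> k.
  case: (unliftP ord_max k) => [k'|] ->; rewrite ?lift_perm_id //.
  by rewrite lift_perm_lift -si0 permE ulsfK.
by apply: eq_bigl => s; rewrite lift_perm_id eqxx.
Qed.

Lemma sum_rec (R : comNzRingType) n (w : 'I_n -> bool -> R) :
  \sum_(p : 'S_n) \prod_(a : 'I_n) w a (is_record p a)
  = \prod_(a : 'I_n) (w a true + (a : nat)%:R * w a false).
Proof.
elim: n w => [|n IH] w.
  rewrite big_ord0 (eq_bigr (fun _ => 1)) => [|p _]; last by rewrite big_ord0.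
  by rewrite sumr_const card_Sn mulr1n.
rewrite (partition_big (fun p : 'S_n.+1 => p ord_max) predT) //=.
rewrite (eq_bigr (fun j => w ord_max (j == ord0) *
   \sum_(s : 'S_n) \prod_(a : 'I_n) w (widen_ord (leqnSn n) a) (is_record s a))); last first.
  move=> j _; rewrite sum_lift_perm mulr_sumr; apply: eq_bigr => s _.
  rewrite big_ord_recr /= rec_max mulrC; congr (_ * _); apply: eq_bigr => a _.
  have -> : widen_ord (leqnSn n) a = lift ord_max a by apply: val_inj; exact: (esym (lift_max a)).
  by rewrite rec_lift.
rewrite -big_distrl /= (IH (fun a => w (widen_ord (leqnSn n) a))) [RHS]big_ord_recr /=.
rewrite mulrC; congr (_ * _).
rewrite big_ord_recl /= (eq_bigr (fun _ => w ord_max false)); last first.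
  by move=> i _; rewrite eq_sym (negbTE (neq_lift ord0 i)).
by rewrite sumr_const card_ord eqxx mulr_natl.
Qed.

Lemma sum_ind (R : comNzRingType) (T : finType) (X : T) (f : T -> R) :
  \sum_(B : T) ((X == B)%:R * f B) = f X.
Proof.
rewrite (bigD1 X) //= eqxx mul1r big1 ?addr0 // => B.
by rewrite eq_sym => /negbTE ->; rewrite mul0r.
Qed.

Lemma eqset_prod (R : comNzRingType) (T : finType) (A B : {set T}) :
  (A == B)%:R = \prod_(b : T) ((b \in A) == (b \in B))%:R :> R.
Proof.
have [-> | neq] := eqVneq A B.
  by rewrite big1 // => b _; rewrite eqxx.
have [b Hb] : exists b, (b \in A) != (b \in B).
  apply/existsP; apply: contraR neq => /existsPn H; apply/eqP/setP => x.
  by apply/eqP; move: (H x); rewrite negbK.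
by rewrite (bigD1 b) //= (negbTE Hb) mul0r.
Qed.

Lemma prod_compl (R : comNzRingType) (T : finType) (B : {set T}) (c : R) :
  \prod_(b : T) ((true == (b \in B))%:R + c * (false == (b \in B))%:R) = c ^+ #|~: B|.
Proof.
rewrite -prodr_const (bigID (fun b => b \in B)) /= big1 ?mul1r.
  apply: eq_big => [b|b]; first by rewrite inE.
  by move/negbTE ->; rewrite /= add0r mulr1.
by move=> b ->; rewrite /= mulr0 addr0.
Qed.

Lemma sum_tuple (R : comNzRingType) n k (g : 'I_n -> {set 'I_k} -> R) :
  \sum_(t : {ffun 'I_k -> 'S_n}) \prod_(a : 'I_n) g a [set b | is_record (t b) a]
  = \prod_(a : 'I_n) \sum_(B : {set 'I_k}) ((a : nat)%:R ^+ #|~: B| * g a B).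
Proof.
transitivity (\sum_(t : {ffun 'I_k -> 'S_n}) \sum_(M : {ffun 'I_n -> {set 'I_k}})
   \prod_(a : 'I_n) (([set b | is_record (t b) a] == M a)%:R * g a (M a))).
  apply: eq_bigr => t _.
  rewrite -(bigA_distr_bigA (fun (a : 'I_n) (B : {set 'I_k}) =>
     (([set b | is_record (t b) a] == B)%:R * g a B))) /=.
  by apply: eq_bigr => a _; rewrite sum_ind.
rewrite exchange_big /= bigA_distr_bigA; apply: eq_bigr => M _.
rewrite (eq_bigr (fun t : {ffun 'I_k -> 'S_n} => (\prod_(a : 'I_n) g a (M a)) *
   \prod_(b : 'I_k) \prod_(a : 'I_n) ((is_record (t b) a) == (b \in M a))%:R)); last first.
  move=> t _; rewrite big_split /= mulrC; congr (_ * _).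
  rewrite exchange_big /=; apply: eq_bigr => a _; rewrite eqset_prod.
  by apply: eq_bigr => b _; rewrite inE.
rewrite -big_distrr /= -(bigA_distr_bigA (fun (b : 'I_k) (p : 'S_n) => \prod_(a : 'I_n) ((is_record p a) == (b \in M a))%:R)) /=.
rewrite (eq_bigr (fun b : 'I_k => \prod_(a : 'I_n) ((true == (b \in M a))%:R + (a : nat)%:R * (false == (b \in M a))%:R))); last first.
  by move=> b _; rewrite (@sum_rec _ _ (fun a x => (x == (b \in M a))%:R)).
rewrite exchange_big /= -big_split /=; apply: eq_bigr => a _.
by rewrite prod_compl mulrC.
Qed.

Lemma sum_sets (R : comNzRingType) k (c : R) (f : 'I_k.+1 -> R) :
  \sum_(B : {set 'I_k}) c ^+ #|~: B| * f (inord #|B|)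
  = \sum_(b < k.+1) ('C(k, b)%:R * c ^+ (k - b)) * f b.
Proof.
rewrite (partition_big (fun B : {set 'I_k} => inord #|B| : 'I_k.+1) predT) //=.
apply: eq_bigr => b _.
have Hc (B : {set 'I_k}) : (#|B| <= k)%N.
  have := max_card (mem B). by rewrite card_ord.
transitivity (\sum_(B in [set B : {set 'I_k} | #|B| == b]) c ^+ (k - b) * f b).
  apply: eq_big => B.
    by rewrite inE -(inj_eq val_inj) /= inordK // ltnS.
  move=> /eqP HB; have HB' : #|B| = b by rewrite -HB inordK // ltnS.
  rewrite HB'; congr (_ ^+ _ * f _); last by apply: val_inj; rewrite /= inordK // ltnS HB'.
  have := cardsC B; rewrite card_ord HB' => E; apply/eqP; rewrite -(eqn_add2l b) E subnKC // -ltnS; exact: ltn_ord.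
by rewrite sumr_const card_draws card_ord -mulrA mulr_natl.
Qed.

Lemma Fj_mul (R : fieldType) k j (X : 'I_k.+1 -> R) : (j.-1)%:R != 0 :> R ->
  (j.-1)%:R ^+ k * Fj k j X = \sum_(b < k.+1) 'C(k, b)%:R * (j.-1)%:R ^+ (k - b) * X b.
Proof.
move=> a0; rewrite /Fj mulr_sumr; apply: eq_bigr => b _.
rewrite expfB_cond; last by rewrite (negbTE a0) add0n -ltnS.
by ring.
Qed.

Definition GF (R : comNzRingType) n k (C : {ffun 'I_k.+1 -> bool}) : {poly R} :=
  \sum_(t : {ffun 'I_k -> 'S_n}) 'X^(weight C t).

Definition Hn (R : comNzRingType) k (C : {ffun 'I_k.+1 -> bool}) (a : nat) : {poly R} :=
  \sum_(b < k.+1) ('C(k, b)%:R * (a%:R) ^+ (k - b)) * 'X^(C b).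
Arguments GF R n {k} C.
Arguments Hn R {k} C a.

Lemma GF_prod (R : comNzRingType) n k (C : {ffun 'I_k.+1 -> bool}) :
  GF R n C = \prod_(a : 'I_n) Hn R C a.
Proof.
rewrite /GF /Hn.
under [RHS]eq_bigr => a _ do rewrite -(@sum_sets _ _ _ (fun b => 'X^(C b))).
rewrite -(@sum_tuple _ _ _ (fun a B => 'X^(C (inord #|B|)))); apply: eq_bigr => t _.
rewrite /weight /optset -prodr_const big_mkcond /=; apply: eq_bigr => a _.
by rewrite inE /lcount; case: (C _).
Qed.

Lemma Hn0 (R : comNzRingType) k (C : {ffun 'I_k.+1 -> bool}) :
  Hn R C 0 = 'X^(c_k C).
Proof.
rewrite /Hn big_ord_recr /= subnn expr0 mulr1 binn mul1r big1 ?add0r //.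
move=> b _; rewrite expr0n subn_eq0 leqNgt ltn_ord /= mulr0 mul0r //.
Qed.

Lemma Hn_factor (R : realFieldType) k (C : {ffun 'I_k.+1 -> bool}) j : (2 <= j)%N ->
  Hn R C j.-1 = ((j.-1)%:R ^+ k * Fj k j (Cvec R C)) *: 'X
              + ((j.-1)%:R ^+ k * Fj k j (Cvec' R C))%:P.
Proof.
move=> j2; have a0 : (j.-1)%:R != 0 :> R by rewrite pnatr_eq0 -lt0n -ltnS prednK // ltnW.
rewrite !Fj_mul // scaler_suml rmorph_sum -big_split /=; apply: eq_bigr => b _.
have -> : ('C(k, b)%:R * (j.-1)%:R ^+ (k - b) : {poly R})
   = ('C(k, b)%:R * (j.-1)%:R ^+ (k - b) : R)%:P by rewrite rmorphM rmorphXn /= !polyC_natr.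
rewrite /Cvec /Cvec'; case: (C b) => /=.
  by rewrite subrr mulr0 addr0 mulr1 mul_polyC expr1.
by rewrite subr0 mulr0 scale0r add0r !mulr1.
Qed.

Lemma GF_formula (R : realFieldType) n k (C : {ffun 'I_k.+1 -> bool}) : (0 < n)%N ->
  GF R n C = 'X^(c_k C) * \prod_(2 <= j < n.+1)
        (((j.-1)%:R ^+ k * Fj k j (Cvec R C)) *: 'X
         + ((j.-1)%:R ^+ k * Fj k j (Cvec' R C))%:P).
Proof.
move=> n0; rewrite GF_prod.
rewrite (eq_bigr (fun a : 'I_n => Hn R C (nat_of_ord a))) // -(big_mkord xpredT (fun a => Hn R C a)).
rewrite big_ltn // Hn0 big_add1 /=; congr (_ * _).
rewrite [RHS]big_add1 [RHS]big_add1 /=; apply: eq_bigr => i _; by rewrite -(@Hn_factor R k C _ (isT : (2 <= i.+2)%N)).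
Qed.

Lemma lin_mul (R : comNzRingType) (p : {poly R}) a b i :
  ((a *: 'X + b%:P) * p)`_i = (if i == 0%N then 0 else a * p`_i.-1) + b * p`_i.
Proof.
by rewrite mulrDl -scalerAl coefD coefZ coefXM coefCM; case: i => [|i] //=; rewrite mulr0.
Qed.

Lemma prod_lin_small (R : comNzRingType) (s : seq nat) (a b : nat -> R) i :
  (size s < i)%N -> (\prod_(j <- s) (a j *: 'X + (b j)%:P))`_i = 0.
Proof.
elim: s i => [|j s IH] i /=.
  by rewrite big_nil coef1; case: i.
move=> lt; rewrite big_cons lin_mul; case: i lt => [|i] //= lt.
by rewrite !IH ?mulr0 ?addr0 // leqW.
Qed.

Lemma prod_lin_sign (R : comNzRingType) (s : seq nat) (a b : nat -> R) i :
  (\prod_(j <- s) (a j *: 'X - (b j)%:P))`_i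
  = (-1) ^+ (size s + i) * (\prod_(j <- s) (a j *: 'X + (b j)%:P))`_i.
Proof.
elim: s i => [|j s IH] i /=.
  rewrite !big_nil coef1 add0n; case: i => [|i] /=; first by rewrite mulr1.
  by rewrite mulr0.
rewrite !big_cons -polyCN !lin_mul !IH.
case: i => [|i] /=.
  rewrite !addn0 exprS; move: ((-1) ^+ size s) => e; ring.
rewrite !addSn !addnS !exprS; move: ((-1) ^+ (size s + i)) => e; ring.
Qed.

Lemma coef_GF (R : comNzRingType) n k (C : {ffun 'I_k.+1 -> bool}) w :
  (GF R n C)`_w = (Ocount n C (Posz w))%:R.
Proof.
rewrite /GF /Ocount coef_sum.
rewrite (eq_bigr (fun t => if t \in [set t | Posz (weight C t) == Posz w] then 1 else 0)); last first.
  by move=> t _; rewrite coefXn inE eqz_nat eq_sym; case: eqP.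
by rewrite -big_mkcond sumr_const.
Qed.

Lemma Ocount_neg n k (C : {ffun 'I_k.+1 -> bool}) : Ocount n C (-1) = 0%N.
Proof. by rewrite /Ocount; apply: eq_card0 => t; rewrite inE. Qed.

Definition Pup (R : realFieldType) n k (C : {ffun 'I_k.+1 -> bool}) : {poly R} :=
  \prod_(2 <= j < n.+1)
        (((j.-1)%:R ^+ k * Fj k j (Cvec R C)) *: 'X
         + ((j.-1)%:R ^+ k * Fj k j (Cvec' R C))%:P).
Arguments Pup R n {k} C.

Lemma xup_coef (R : realFieldType) n k (C : {ffun 'I_k.+1 -> bool}) i : (0 < n)%N ->
  (xup R n C)`_i = if (i < n.+1)%N then (Ou n C i)%:R else 0.
Proof.
move=> n0.
have HP w : (Pup R n C)`_w = (GF R n C)`_(w + c_k C).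
  by rewrite (@GF_formula R n k C n0) coefXnM ltnNge leq_addl /= addnK.
rewrite /xup coefXM /Ou.
case: i => [|i] /=.
  case E: (c_k C) => /=.
    rewrite (_ : (0 + 1 - 1)%R = Posz 0); last by [].
    by rewrite -coef_GF (@GF_formula R n k C n0) E coefXnM.
  by rewrite (_ : (0 + 0 - 1)%R = -1); [rewrite Ocount_neg | by []].
rewrite -/(Pup R n C) HP coef_GF.
case: ltnP => H.
  congr (_%:R); congr (Ocount _ _ _); lia.
rewrite -coef_GF -HP /Pup prod_lin_small // /index_iota size_iota; lia.
Qed.


Lemma xdown_coef (R : realFieldType) n k (C : {ffun 'I_k.+1 -> bool}) i : (0 < n)%N ->
  (xdown R n C)`_i = if (i < n.+1)%N then (-1) ^+ (n + i) * (Ou n C i)%:R else 0.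
Proof.
move=> n0; have Hu := @xup_coef R n k C _ n0.
rewrite /xdown coefXM prod_lin_sign -/(Pup R n C).
case: i => [|i] /=.
  by have := Hu 0%N; rewrite /xup coefXM /= => <-; rewrite mulr0.
have := Hu i.+1; rewrite /xup coefXM /= -/(Pup R n C) => ->.
case: ifP => _; last by rewrite mulr0.
rewrite /index_iota size_iota; congr (_ * _).
have -> : (n + i.+1 = (n.+1 - 2 + i) + 2)%N by lia.
rewrite (exprD _ (n.+1 - 2 + i) 2) (_ : (-1) ^+ 2 = 1 :> R) ?mulr1 //; by rewrite expr2 mulrNN mulr1.
Qed.

Lemma F_pos (R : realFieldType) k (C : {ffun 'I_k.+1 -> bool}) j :
  (2 <= j)%N -> C != [ffun => false] -> 0 < Fj k j (Cvec R C).
Proof.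
move=> j2 hC.
have [b Cb] : exists b, C b.
  apply/existsP; apply: contraR hC => /existsPn H; apply/eqP/ffunP => b.
  by rewrite ffunE; exact: negbTE (H b).
have a0 : 0 < (j.-1)%:R :> R by rewrite ltr0n -ltnS prednK // ltnW.
rewrite /Fj (bigD1 b) //= ltr_wpDr //.
  apply: sumr_ge0 => i _; rewrite /Cvec; case: (C i); rewrite ?mulr0 ?mul0r //.
  by rewrite mulr1 divr_ge0 ?ler0n // exprn_ge0 // ltW.
rewrite /Cvec Cb mulr1 divr_gt0 ?exprn_gt0 // ltr0n bin_gt0 -ltnS; exact: ltn_ord.
Qed.

Lemma pow_neq0 (R : realFieldType) k j : (2 <= j)%N -> (j.-1)%:R ^+ k != 0 :> R.
Proof. by move=> j2; rewrite expf_neq0 // pnatr_eq0 -lt0n -ltnS prednK // ltnW. Qed.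

Theorem lemma3p4 (R : realFieldType) (k n : nat) (C : {ffun 'I_k.+1 -> bool}) :
  (0 < k)%N -> (2 <= n)%N -> C != [ffun => false] ->
  [/\ xup R n C = \sum_(m < n.+1) (Ou n C m)%:R *: 'X^m,
      xdown R n C = \sum_(m < n.+1) (Os n C m)%:~R *: 'X^m,
      (forall x : R, root (xup R n C) x <->
         x = 0 \/ exists2 j : nat, (2 <= j <= n)%N &
                   x = - (Fj k j (Cvec' R C) / Fj k j (Cvec R C)))
    & (forall x : R, root (xdown R n C) x <->
         x = 0 \/ exists2 j : nat, (2 <= j <= n)%N &
                   x = Fj k j (Cvec' R C) / Fj k j (Cvec R C))].
Proof.
move=> k0 n2 hC; have n0 : (0 < n)%N by apply: leq_trans n2.
split.
- rewrite -(poly_def (n.+1) (fun m => (Ou n C m)%:R)); apply/polyP => i; by rewrite coef_poly xup_coef.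
- rewrite -(poly_def (n.+1) (fun m => (Os n C m)%:~R)); apply/polyP => i; rewrite coef_poly xdown_coef //.
  by case: ifP => // _; rewrite /Os rmorphM rmorphXn rmorphN1.
- move=> x; rewrite /root /xup hornerM hornerX horner_prod mulf_eq0 prodf_seq_eq0.
  split.
    case/orP => [/eqP -> | /hasP [j]]; first by left.
    rewrite mem_index_iota ltnS => jr /=; have j2 : (2 <= j)%N by case/andP: jr.
    rewrite hornerD hornerZ hornerX hornerC => /eqP H.
    right; exists j => //.
    have Fn := @F_pos R k C j j2 hC; have An := @pow_neq0 R k j j2.
    have -> : x = (((j.-1)%:R ^+ k * Fj k j (Cvec R C)) * x) / ((j.-1)%:R ^+ k * Fj k j (Cvec R C)).
      by field; rewrite An /= gt_eqF.
    have -> : (j.-1)%:R ^+ k * Fj k j (Cvec R C) * x = - ((j.-1)%:R ^+ k * Fj k j (Cvec' R C)).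
      by apply/eqP; rewrite -addr_eq0 H.
    by field; rewrite An /= gt_eqF.
  case => [-> | [j jr ->]]; first by rewrite eqxx.
  apply/orP; right; apply/hasP; exists j; first by rewrite mem_index_iota ltnS.
  have j2 : (2 <= j)%N by case/andP: jr.
  have Fn := @F_pos R k C j j2 hC; have An := @pow_neq0 R k j j2.
  rewrite /= hornerD hornerZ hornerX hornerC; apply/eqP; field.
  by rewrite gt_eqF.
- move=> x; rewrite /root /xdown hornerM hornerX horner_prod mulf_eq0 prodf_seq_eq0.
  split.
    case/orP => [/eqP -> | /hasP [j]]; first by left.
    rewrite mem_index_iota ltnS => jr /=; have j2 : (2 <= j)%N by case/andP: jr.
    rewrite hornerD hornerN hornerZ hornerX hornerC => /eqP H.
    right; exists j => //.
    have Fn := @F_pos R k C j j2 hC; have An := @pow_neq0 R k j j2.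
    have -> : x = (((j.-1)%:R ^+ k * Fj k j (Cvec R C)) * x) / ((j.-1)%:R ^+ k * Fj k j (Cvec R C)).
      by field; rewrite An /= gt_eqF.
    have -> : (j.-1)%:R ^+ k * Fj k j (Cvec R C) * x = ((j.-1)%:R ^+ k * Fj k j (Cvec' R C)).
      by apply/eqP; rewrite -subr_eq0 H.
    by field; rewrite An /= gt_eqF.
  case => [-> | [j jr ->]]; first by rewrite eqxx.
  apply/orP; right; apply/hasP; exists j; first by rewrite mem_index_iota ltnS.
  have j2 : (2 <= j)%N by case/andP: jr.
  have Fn := @F_pos R k C j j2 hC; have An := @pow_neq0 R k j j2.
  rewrite /= hornerD hornerN hornerZ hornerX hornerC; apply/eqP; field.
  by rewrite gt_eqF.
Qed.
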